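(* For integers $n\ge k\ge 0$ define the Salié coefficients $s(n,k)$ by the bivariate generating function $$\sum_{n,k\ge 0}\frac{x^{2n}}{(2n)!}\,s(n,k)\,y^{k}=\frac{\cosh\!\left(\tfrac12 x\sqrt{1+4y}\right)}{\cosh\!\left(\tfrac12 x\right)},$$ and set $\epsilon(n,k)=|s(n,k)|/4^{k}$. For a positive integer $N$, let $M_E$ be the $N\times N$ lower triangular matrix with entries $(M_E)_{m,n}=(-1)^{m-n}4^{m}\binom{m}{2(m-n)}$ for $1\le n\le m\le N$ (and $0$ for $n>m$). Then $s(n,k)=(-1)^{n-k}|s(n,k)|$ for all $n\ge k\ge 1$, the matrix $M_E$ is invertible with $(M_E^{-1})_{n,k}=\epsilon(n,k)$ for $1\le k\le n\le N$, and for every $n\ge1$ $$|E_{2n}(1/2)|=(-1)^{n}E_{2n}(1/2)=\sum_{k=1}^{n}\epsilon(n,k).$$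
   Context: $E_m(x)$ denotes the Euler polynomials, defined by $\frac{2e^{xt}}{e^{t}+1}=\sum_{m\ge0}E_m(x)\frac{t^m}{m!}$. Equivalently, the column vector $\vec E$ with entries $|E_{2n}(1/2)|$, $n=1,\dots,N$, satisfies $M_E\vec E=\vec 1$ (the all-ones column). *)

(* Defs.v *)
From HB Require Import structures.
From mathcomp Require Import all_boot all_order all_algebra.
Set Implicit Arguments. Unset Strict Implicit. Unset Printing Implicit Defensive.
Import Order.TTheory GRing.Theory Num.Theory.
Local Open Scope ring_scope.

(* s satisfies the Salié generating-function identity
     sum_{n,k} x^{2n}/(2n)! s(n,k) y^k = cosh(x sqrt(1+4y)/2) / cosh(x/2)
   as formal power series, written coefficientwise after multiplying by
   cosh(x/2) = sum_m 4^{-m} x^{2m}/(2m)!, and using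
   cosh(x sqrt(1+4y)/2) = sum_n (1+4y)^n 4^{-n} x^{2n}/(2n)!:
   coefficient of x^{2n}/(2n)! y^k on both sides. *)
Definition salie_gf (s : nat -> nat -> rat) : Prop :=
  forall n k : nat,
    \sum_(j < n.+1) ('C(n.*2, j.*2)%:R / 4 ^+ (n - j)) * s j k
    = 'C(n, k)%:R * 4 ^+ k / 4 ^+ n.

(* E is the family of Euler polynomials: 2 e^{xt}/(e^t+1) = sum_m E_m(x) t^m/m!,
   i.e. (e^t + 1) * sum_m E_m(x) t^m/m! = 2 e^{xt}, coefficient of t^m/m!. *)
Definition euler_gf (E : nat -> {poly rat}) : Prop :=
  forall m : nat, \sum_(j < m.+1) 'C(m, j)%:R *: E j + E m = 2%:R *: 'X^m.

Definition eps (s : nat -> nat -> rat) (n k : nat) : rat := `|s n k| / 4 ^+ k.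

(* M_E (N x N), with 1-based index m = i+1, n = j+1 for i j : 'I_N:
   (M_E)_{m,n} = (-1)^{m-n} 4^m binom(m, 2(m-n)) if n <= m, 0 otherwise. *)
Definition ME (N : nat) : 'M[rat]_N :=
  \matrix_(i < N, j < N)
    if (j <= i)%N then (-1) ^+ (i - j) * 4 ^+ i.+1 * 'C(i.+1, (i - j).*2)%:R
    else 0.

(* Main.v *)
Require Import Defs.
From HB Require Import structures.
From mathcomp Require Import all_boot all_order all_algebra.
From mathcomp Require Import ring lra zify.
From Stdlib Require Import FunctionalExtensionality.
Import Order.TTheory GRing.Theory Num.Theory.
Local Open Scope ring_scope.

Definition emul (f g : nat -> rat) (n : nat) : rat :=
  \sum_(i < n.+1) 'C(n, i)%:R * f i * g (n - i)%N.
Definition Dr (f : nat -> rat) (n : nat) : rat := f n.+1.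
Definition padd (f g : nat -> rat) (n : nat) : rat := f n + g n.
Definition pscal (c : rat) (f : nat -> rat) (n : nat) : rat := c * f n.
Definition one (n : nat) : rat := (n == 0)%:R.

Lemma emulC f g : emul f g = emul g f.
Proof.
apply: functional_extensionality => n; rewrite /emul.
rewrite (reindex_inj rev_ord_inj) /=; apply: eq_bigr => i _.
have hi : (i <= n)%N by rewrite -ltnS.
rewrite subSS bin_sub // subKn //; ring.
Qed.

Lemma emul_addl f g h : emul (padd f g) h = padd (emul f h) (emul g h).
Proof.
apply: functional_extensionality => n; rewrite /emul /padd -big_split /=.
by apply: eq_bigr => i _; ring.
Qed.

Lemma emul_addr f g h : emul h (padd f g) = padd (emul h f) (emul h g).
Proof. by rewrite emulC emul_addl !(emulC h). Qed.

Lemma emul_scall c f g : emul (pscal c f) g = pscal c (emul f g).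
Proof.
apply: functional_extensionality => n; rewrite /emul /pscal big_distrr /=.
by apply: eq_bigr => i _; ring.
Qed.

Lemma emul_scalr c f g : emul g (pscal c f) = pscal c (emul g f).
Proof. by rewrite emulC emul_scall emulC. Qed.

Lemma emul1 f : emul one f = f.
Proof.
apply: functional_extensionality => n; rewrite /emul big_ord_recl /= /one.
rewrite big1 => [|i _]; last by rewrite mulr0 mul0r.
by rewrite addr0 bin0 subn0 mulr1 mul1r.
Qed.

Lemma Dr_emul f g : Dr (emul f g) = padd (emul (Dr f) g) (emul f (Dr g)).
Proof.
apply: functional_extensionality => n; rewrite /Dr /padd /emul.
rewrite big_ord_recl /=.
under eq_bigr => i _ do rewrite /bump /= add1n binS natrD mulrDl mulrDl subSS.
rewrite big_split /= addrA addrC; congr (_ + _).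
rewrite [in RHS]big_ord_recl /= [X in _ + X = _]big_ord_recr /= (bin_small (ltnSn n)).
rewrite !bin0 !mul0r addr0 !subn0; congr (_ + _).
apply: eq_bigr => i _; rewrite /bump /= add1n.
by rewrite subnS prednK // subn_gt0.
Qed.


Definition pe (n : nat) (f : nat -> rat) : {poly rat} :=
  \poly_(i < n) (f i / (i`!)%:R).

Lemma fact_neq0 (i : nat) : (i`!)%:R != 0 :> rat.
Proof. by rewrite pnatr_eq0 -lt0n fact_gt0. Qed.

Lemma emul_pe (n : nat) f g (m : nat) : (m < n)%N -> emul f g m = (m`!)%:R * (pe n f * pe n g)`_m.
Proof.
move=> hm; rewrite coefM /emul big_distrr /=; apply: eq_bigr => i _.
have hi : (i <= m)%N by rewrite -ltnS.
rewrite !coef_poly ifT; last by lia.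
rewrite ifT; last by lia.
have := bin_fact hi => /(congr1 (fun x => x%:R : rat)); rewrite !natrM => <-.
have h1 := fact_neq0 i; have h2 := fact_neq0 (m - i).
by field; rewrite h1 h2.
Qed.

Lemma coefM_eq (n : nat) (p p' q : {poly rat}) (m : nat) :
  (forall i, (i < n)%N -> p`_i = p'`_i) -> (m < n)%N -> (p * q)`_m = (p' * q)`_m.
Proof.
move=> h hm; rewrite !coefM; apply: eq_bigr => i _; rewrite h //.
by have := ltn_ord i; lia.
Qed.

Lemma pe_emul n f g i : (i < n)%N -> (pe n (emul f g))`_i = (pe n f * pe n g)`_i.
Proof.
move=> hi; rewrite coef_poly hi (emul_pe n f g i hi).
by field; rewrite fact_neq0.
Qed.

Lemma emulA f g h : emul (emul f g) h = emul f (emul g h).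
Proof.
apply: functional_extensionality => m.
rewrite (emul_pe _ _ _ _ (ltnSn m)) (emul_pe _ _ _ _ (ltnSn m)); congr (_ * _).
rewrite (coefM_eq _ _ (pe m.+1 f * pe m.+1 g) _ _ _ (ltnSn m)); last exact: pe_emul.
rewrite [in RHS]mulrC (coefM_eq _ (pe m.+1 (emul g h)) (pe m.+1 g * pe m.+1 h) _ _ _ (ltnSn m)); last exact: pe_emul.
by rewrite [in RHS]mulrC mulrA.
Qed.


Lemma emulE f g n : emul f g n = \sum_(i < n.+1) 'C(n, i)%:R * f i * g (n - i)%N.
Proof. by []. Qed.

Lemma emul_addlE f g h n : emul (padd f g) h n = emul f h n + emul g h n.
Proof. by rewrite emul_addl. Qed.
Lemma emul_addrE f g h n : emul h (padd f g) n = emul h f n + emul h g n.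
Proof. by rewrite emul_addr. Qed.
Lemma emul_scallE c f g n : emul (pscal c f) g n = c * emul f g n.
Proof. by rewrite emul_scall. Qed.
Lemma emul_scalrE c f g n : emul g (pscal c f) n = c * emul g f n.
Proof. by rewrite emul_scalr. Qed.

Lemma Dr_emulE f g n : emul f g n.+1 = emul (Dr f) g n + emul f (Dr g) n.
Proof. by have := congr1 (fun F => F n) (Dr_emul f g). Qed.

Lemma D2_emulE f g n : emul f g n.+2 =
  emul (Dr (Dr f)) g n + 2 * emul (Dr f) (Dr g) n + emul f (Dr (Dr g)) n.
Proof.
rewrite Dr_emulE.
have -> : emul (Dr f) g n.+1 = emul (Dr (Dr f)) g n + emul (Dr f) (Dr g) n by rewrite Dr_emulE.
have -> : emul f (Dr g) n.+1 = emul (Dr f) (Dr g) n + emul f (Dr (Dr g)) n by rewrite Dr_emulE.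
ring.
Qed.

Lemma ode1_zero (P h : nat -> rat) :
  (forall n, P n.+1 = emul h P n) -> P 0%N = 0 -> forall n, P n = 0.
Proof.
move=> hP h0 n; elim: n {-2}n (leqnn n) => [|n IH] m hm.
  by move: hm; rewrite leqn0 => /eqP ->.
move: hm; rewrite leq_eqVlt => /orP [/eqP -> | hm]; last exact: IH.
rewrite hP emulE big1 // => i _; rewrite IH ?mulr0 //; lia.
Qed.

Lemma emul_inv_zero (c H : nat -> rat) :
  c 0%N = 1 -> (forall n, emul c H n = 0) -> forall n, H n = 0.
Proof.
move=> c0 hc n; elim: n {-2}n (leqnn n) => [|n IH] m hm.
  move: hm; rewrite leqn0 => /eqP ->; have := hc 0%N.
  by rewrite emulE big_ord_recl big_ord0 c0 bin0 addr0 mulr1 mul1r.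
have := hc m; rewrite emulE big_ord_recl big1 => [|i _].
  by rewrite c0 bin0 addr0 mulr1 mul1r subn0.
rewrite IH ?mulr0 //= /bump /=; lia.
Qed.

Lemma tri_zero (c : nat -> nat -> rat) (y : nat -> rat) (K : nat) :
  (forall n, c n n = 1) ->
  (forall n, (n < K)%N -> \sum_(j < n.+1) c n j * y j = 0) ->
  forall n, (n < K)%N -> y n = 0.
Proof.
move=> hc hy n; elim: n {-2}n (leqnn n) => [|n IH] m hm hK.
  move: hm; rewrite leqn0 => /eqP e; subst m.
  by have := hy 0%N hK; rewrite big_ord_recl big_ord0 hc addr0 mul1r.
have := hy m hK; rewrite big_ord_recr /= hc mul1r big1 ?add0r // => i _.
rewrite IH ?mulr0 //; have := ltn_ord i; lia.
Qed.

Lemma sum_parity (F : nat -> rat) n :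
  \sum_(i < n.*2.+1) F i = \sum_(i < n.+1) F i.*2 + \sum_(i < n) F i.*2.+1.
Proof.
elim: n => [|n IH]; first by rewrite !big_ord1 big_ord0 addr0.
rewrite doubleS big_ord_recr big_ord_recr /= IH.
rewrite (big_ord_recr n.+1 (fun i => F i.*2)) (big_ord_recr n (fun i => F i.*2.+1)) /=.
rewrite -doubleS; ring.
Qed.


Definition cs (n : nat) : rat := if odd n then 0 else (-1/4) ^+ n./2.
Definition sn (n : nat) : rat := if odd n then (-1/4) ^+ n./2 / 2 else 0.

Lemma half_S_odd n : odd n -> n.+1./2 = (n./2).+1.
Proof. by move=> h; rewrite /= uphalf_half h. Qed.
Lemma half_S_even n : ~~ odd n -> n.+1./2 = n./2.
Proof. by move=> h; rewrite /= uphalf_half (negbTE h). Qed.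

Lemma Dr_cs n : Dr cs n = - (1/2) * sn n.
Proof.
rewrite /Dr /cs /sn; case: (boolP (odd n)) => h; rewrite /= ?uphalf_half h /=.
  by rewrite add1n exprS; field.
by rewrite mulr0.
Qed.

Lemma Dr_sn n : Dr sn n = (1/2) * cs n.
Proof.
rewrite /Dr /cs /sn; case: (boolP (odd n)) => h; rewrite /= ?uphalf_half h /=.
  by rewrite mulr0.
by rewrite (negbTE h) add0n; field.
Qed.

Lemma cs0 : cs 0%N = 1. Proof. by []. Qed.
Lemma sn0 : sn 0%N = 0. Proof. by []. Qed.

Fixpoint ttab (n : nat) : nat -> rat :=
  match n with
  | 0 => fun _ => 0
  | m.+1 => fun i => if (i <= m)%N then ttab m i else (one m + emul (ttab m) (ttab m) m) / 2
  end.
Definition tn (i : nat) : rat := ttab i i.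

Lemma ttab_tn n i : (i <= n)%N -> ttab n i = tn i.
Proof.
elim: n i => [|n IH] i hi.
  by move: hi; rewrite leqn0 => /eqP ->.
rewrite /=; case: ifP => h; first exact: IH.
have -> : i = n.+1 by lia.
by rewrite /tn /= ltnn.
Qed.

Lemma tn0 : tn 0%N = 0. Proof. by []. Qed.

Lemma tn_rec m : tn m.+1 = (one m + emul tn tn m) / 2.
Proof.
rewrite /tn /= ltnn; congr ((_ + _) / _).
rewrite !emulE; apply: eq_bigr => i _.
rewrite !ttab_tn //; have := ltn_ord i; lia.
Qed.

Lemma tn_ge0 n : 0 <= tn n.
Proof.
elim: n {-2}n (leqnn n) => [|n IH] m hm.
  by move: hm; rewrite leqn0 => /eqP ->; rewrite tn0.
move: hm; rewrite leq_eqVlt => /orP [/eqP -> | hm]; last exact: IH.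
rewrite tn_rec divr_ge0 // addr_ge0 //.
rewrite emulE sumr_ge0 // => i _; rewrite !mulr_ge0 ?ler0n ?IH //.
  by have := ltn_ord i; lia.
by lia.
Qed.

Lemma Dr_csF : Dr cs = pscal (- (1/2)) sn.
Proof. by apply: functional_extensionality => n; rewrite Dr_cs. Qed.
Lemma Dr_snF : Dr sn = pscal (1/2) cs.
Proof. by apply: functional_extensionality => n; rewrite Dr_sn. Qed.
Lemma Dr_tnF : Dr tn = pscal (1/2) (padd one (emul tn tn)).
Proof.
apply: functional_extensionality => n; rewrite /Dr tn_rec /pscal /padd; by field.
Qed.

Lemma cs_one n : emul cs one n = cs n.
Proof. by rewrite emulC emul1. Qed.

Lemma cs_tn n : emul cs tn n = sn n.
Proof.
pose P := padd (emul cs tn) (pscal (-1) sn).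
suff : forall n, P n = 0 by move=> /(_ n); rewrite /P /padd /pscal; lra.
apply: (ode1_zero P (pscal (1/2) tn)); last first.
  by rewrite /P /padd /pscal emulE big_ord1 tn0 sn0 /=; ring.
move=> m; rewrite /P /padd /pscal emul_scallE emul_addrE emul_scalrE.
rewrite Dr_emulE Dr_csF Dr_tnF emul_scallE emul_scalrE emul_addrE cs_one.
rewrite -/(Dr sn m) Dr_snF /pscal.
have eA : emul cs (emul tn tn) = emul tn (emul cs tn) by rewrite [RHS]emulC emulA.
rewrite eA (emulC sn tn).
ring.
Qed.


Definition gk (s : nat -> nat -> rat) (k n : nat) : rat :=
  if odd n then 0 else (-1) ^+ (n./2 + k) * s n./2 k.
Definition qk (k n : nat) : rat :=
  if odd n then 0 else 'C(n./2, k)%:R * (-1/4) ^+ n./2 * (-4) ^+ k.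
Definition gprev s (k : nat) : nat -> rat :=
  match k with 0 => fun _ => 0 | k'.+1 => gk s k' end.
Definition qprev (k : nat) : nat -> rat :=
  match k with 0 => fun _ => 0 | k'.+1 => qk k' end.

Lemma q_rec k n : qk k n.+2 = qprev k n - (1/4) * qk k n.
Proof.
case: k => [|k]; rewrite /qprev /qk /= !negbK; case: (odd n).
- by rewrite mulr0 subr0.
- by rewrite !bin0 !expr0 exprS; field.
- by rewrite mulr0 subr0.
- by rewrite binS natrD !exprS; field.
Qed.

Lemma s0k s (hs : salie_gf s) k : s 0%N k = (k == 0%N)%:R.
Proof.
have := hs 0%N k; rewrite big_ord1 /= bin0 subn0 expr0 divr1 mul1r => ->.
case: k => [|k]; first by rewrite bin0 expr0 mulr1.
by rewrite bin0n mul0r.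
Qed.

Lemma neg14 (i : nat) : (-1/4 : rat)^+i = (-1)^+i / 4^+i.
Proof. by rewrite exprMn exprVn. Qed.
Lemma negm4 (i : nat) : (-4 : rat)^+i = (-1)^+i * 4^+i.
Proof. by rewrite -exprNn. Qed.

Lemma cs_g s (hs : salie_gf s) k n : emul cs (gk s k) n = qk k n.
Proof.
rewrite emulE /qk; case: ifP => ho.
  apply: big1 => i _; rewrite /cs /gk.
  have hi : (i <= n)%N by rewrite -ltnS.
  rewrite oddB // ho; case: (odd i) => /=; ring.
have [m em] : exists m, n = m.*2.
  by exists n./2; rewrite -[n in LHS]odd_double_half ho.
subst n; rewrite half_double (sum_parity (fun i => 'C(m.*2, i)%:R * cs i * gk s k (m.*2 - i))) [X in _ + X]big1 ?addr0; last first.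
  by move=> i _; rewrite /cs /= odd_double /=; ring.
have := hs m k; rewrite (reindex_inj rev_ord_inj) /= => hm.
rewrite neg14 negm4.
have -> : 'C(m, k)%:R * ((-1) ^+ m / 4 ^+ m) * ((-1) ^+ k * 4 ^+ k) =
   (-1) ^+ (m + k) * ('C(m, k)%:R * 4 ^+ k / 4 ^+ m) :> rat by rewrite exprD; ring.
rewrite -hm big_distrr /=; apply: eq_bigr => i _.
have hi : (i <= m)%N by rewrite -ltnS.
rewrite subSS /cs /gk odd_double half_double -doubleB odd_double half_double.
rewrite subKn // neg14 doubleB bin_sub; last by rewrite leq_double.
have -> : (m + k = i + (m - i + k))%N by lia.
rewrite !exprD; ring.
Qed.

Lemma Dr_pscal c f : Dr (pscal c f) = pscal c (Dr f).
Proof. by []. Qed.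

Lemma cs_tnF : emul cs tn = sn.
Proof. by apply: functional_extensionality => n; rewrite cs_tn. Qed.

Lemma emul0r f n : emul (fun _ => 0) f n = 0.
Proof. by rewrite emulE big1 // => i _; rewrite mulr0 mul0r. Qed.
Lemma emulr0 f n : emul f (fun _ => 0) n = 0.
Proof. by rewrite emulE big1 // => i _; rewrite mulr0. Qed.

Lemma cs_gprev s (hs : salie_gf s) k n : emul cs (gprev s k) n = qprev k n.
Proof. by case: k => [|k] /=; [rewrite emulr0 | rewrite cs_g]. Qed.

Lemma g_ode s (hs : salie_gf s) k n :
  gk s k n.+2 = emul tn (Dr (gk s k)) n + gprev s k n.
Proof.
pose g := gk s k.
pose H := padd (Dr (Dr g)) (padd (pscal (-1) (emul tn (Dr g))) (pscal (-1) (gprev s k))).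
suff : forall n, H n = 0.
  by move=> /(_ n); rewrite /H /padd /pscal /Dr /g; lra.
apply: (emul_inv_zero cs H cs0) => m.
rewrite /H !emul_addrE !emul_scalrE -emulA cs_tnF cs_gprev //.
have := D2_emulE cs g m.
rewrite Dr_csF Dr_pscal Dr_snF !emul_scallE !cs_g // q_rec => e.
lra.
Qed.

Lemma g_ge0 s (hs : salie_gf s) k n : 0 <= gk s k n.
Proof.
elim: k n => [|k IHk] n.
all: elim: n {-2}n (leqnn n) => [|n IH] m hm.
- by move: hm; rewrite leqn0 => /eqP ->; rewrite /gk /= (s0k s hs) /= mulr1.
- move: hm; rewrite leq_eqVlt => /orP [/eqP -> | hm]; last exact: IH.
  case: n IH => [|n] IH; first by rewrite /gk.
  rewrite (g_ode s hs) /= addr0 emulE sumr_ge0 // => i _.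
  rewrite mulr_ge0 ?mulr_ge0 ?ler0n ?tn_ge0 // /Dr IH //; have := ltn_ord i; lia.
- by move: hm; rewrite leqn0 => /eqP ->; rewrite /gk /= (s0k s hs) /= mulr0.
- move: hm; rewrite leq_eqVlt => /orP [/eqP -> | hm]; last exact: IH.
  case: n IH => [|n] IH; first by rewrite /gk.
  rewrite (g_ode s hs) /= addr_ge0 ?IHk // emulE sumr_ge0 // => i _.
  rewrite mulr_ge0 ?mulr_ge0 ?ler0n ?tn_ge0 // /Dr IH //; have := ltn_ord i; lia.
Qed.

Lemma s_sign s (hs : salie_gf s) j k : 0 <= (-1) ^+ (j + k) * s j k.
Proof. by have := g_ge0 s hs k j.*2; rewrite /gk odd_double half_double. Qed.

Lemma abs_s s (hs : salie_gf s) j k : `|s j k| = (-1) ^+ (j + k) * s j k.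
Proof.
have h := s_sign s hs j k.
have e : s j k = (-1) ^+ (j + k) * ((-1) ^+ (j + k) * s j k).
  by rewrite mulrA -exprD -signr_odd oddD addbb expr0 mul1r.
by rewrite [in LHS]e normrM normr_sign mul1r ger0_norm.
Qed.


Definition cc (n j : nat) : rat := 'C(n.*2, j.*2)%:R / 4 ^+ (n - j).

Lemma cc_diag n : cc n n = 1.
Proof. by rewrite /cc binn subnn expr0 divr1. Qed.

Lemma s_above s (hs : salie_gf s) j k : (j < k)%N -> s j k = 0.
Proof.
move=> hjk; apply: (tri_zero cc (fun j => s j k) k cc_diag) => // n hn.
by rewrite -/(cc _ _) (hs n k) bin_small // !mul0r.
Qed.

Lemma s_col0 s (hs : salie_gf s) n : (0 < n)%N -> s n 0%N = 0.
Proof.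
move=> hn.
have := tri_zero cc (fun j => s j 0%N - (j == 0%N)%:R) n.+1 cc_diag.
move=> /(_ _ n (ltnSn n)) /=; rewrite eqn0Ngt hn subr0; apply.
move=> m _; under eq_bigr => j _ do rewrite mulrBr.
rewrite sumrB (hs m 0%N) big_ord_recl big1 => [|j _]; last by rewrite mulr0.
by rewrite /cc /= bin0 bin0 subn0 !mulr1 mul1r addr0 subrr.
Qed.

Lemma sum_extend (F : nat -> rat) j n :
  (j <= n)%N -> (forall k, (j < k)%N -> F k = 0) ->
  \sum_(k < j.+1) F k = \sum_(k < n.+1) F k.
Proof.
move=> hjn hF; rewrite -!(big_mkord xpredT) [RHS](big_cat_nat _ (n := j.+1)) //=.
rewrite [X in _ = _ + X]big_nat_cond [X in _ = _ + X]big1 ?addr0 // => k /andP [/andP [hk _] _]; exact: hF.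
Qed.

Definition ep (n : nat) : rat := (2^-1) ^+ n.
Definition em (n : nat) : rat := (- 2^-1) ^+ n.
Definition ones (n : nat) : rat := 1.

Lemma euler_eval (E : nat -> {poly rat}) (hE : euler_gf E) m :
  emul (fun j => (E j).[2^-1]) ones m + (E m).[2^-1] = 2 * ep m.
Proof.
have := congr1 (fun p => p.[2^-1]) (hE m); rewrite /= hornerD horner_sum hornerZ hornerXn.
move=> <-; congr (_ + _); rewrite emulE; apply: eq_bigr => i _.
by rewrite hornerZ /ones mulr1 mulr_natl.
Qed.

Lemma em_ep m : emul em ep m = one m.
Proof.
rewrite emulE /one.
have := exprDn (2^-1 : rat) (- 2^-1) m; rewrite subrr expr0n => ->.
apply: eq_bigr => i _; rewrite /em /ep mulr_natl; ring.
Qed.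

Lemma em_ones m : emul em ones m = ep m.
Proof.
rewrite emulE /ep.
have -> : (2^-1 : rat) = 1 + - 2^-1 by field.
rewrite exprDn; apply: eq_bigr => i _; rewrite /em /ones expr1n mulr_natl; ring.
Qed.

Lemma w_a (E : nat -> {poly rat}) (hE : euler_gf E) m :
  emul (padd ep em) (fun j => (E j).[2^-1]) m = 2 * one m.
Proof.
set a := fun j => (E j).[2^-1].
have hF : padd (emul a ones) a = pscal 2 ep.
  by apply: functional_extensionality => n; rewrite /padd /pscal euler_eval.
have := congr1 (fun F => emul em F m) hF; rewrite /= emul_addrE emul_scalrE em_ep => <-.
rewrite emul_addlE; congr (_ + _).
have -> : emul em (emul a ones) = emul a ep.
  rewrite -emulA (emulC em a) emulA.
  by congr emul; apply: functional_extensionality => n; rewrite em_ones.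
by rewrite emulC.
Qed.

Lemma w_odd n : odd n -> padd ep em n = 0.
Proof.
move=> h; rewrite /padd /ep /em exprNn -signr_odd h expr1; ring.
Qed.

Lemma w_even i : padd ep em i.*2 = 2 * (4^-1) ^+ i.
Proof.
rewrite /padd /ep /em exprNn -signr_odd odd_double expr0 mul1r -mul2n exprM.
have -> : (2^-1 : rat) ^+ 2 = 4^-1 by field.
ring.
Qed.

Lemma a_odd (E : nat -> {poly rat}) (hE : euler_gf E) m : odd m -> (E m).[2^-1] = 0.
Proof.
elim: m {-2}m (leqnn m) => [|n IH] m hm ho.
  by move: hm; rewrite leqn0 => /eqP e; subst m.
have := w_a E hE m; rewrite emulE big_ord_recl big1 => [|i _].
  rewrite /one; have -> : (m == 0%N) = false by case: m ho {hm}.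
  rewrite bin0 subn0 addr0 /padd /ep /em !expr0 mulr0 => /eqP.
  by rewrite mul1r mulf_eq0 -(natrD _ 1 1) pnatr_eq0 /= => /eqP.
rewrite /bump /=.
case: (boolP (odd i.+1)) => hi; first by rewrite w_odd // mulr0 mul0r.
have him : (i.+1 <= m)%N by have := ltn_ord i; lia.
rewrite IH ?mulr0 // /bump /= add1n; first by lia.
by rewrite oddB // ho; case: (odd i.+1) hi.
Qed.

Lemma a_even (E : nat -> {poly rat}) (hE : euler_gf E) n :
  \sum_(j < n.+1) cc n j * (E j.*2).[2^-1] = (n == 0%N)%:R.
Proof.
have := w_a E hE n.*2; rewrite emulE.
rewrite (sum_parity (fun i => 'C(n.*2, i)%:R * padd ep em i * (E (n.*2 - i)%N).[2^-1])).
rewrite [X in _ + X]big1 ?addr0 => [|i _]; last by rewrite w_odd ?mulr0 ?mul0r //= odd_double.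
rewrite (reindex_inj rev_ord_inj) /= /one double_eq0 => h.
apply: (mulfI (x := 2)) => //; rewrite -h big_distrr /=; apply: eq_bigr => j _.
have hj : (j <= n)%N by rewrite -ltnS.
rewrite subSS w_even.
rewrite -doubleB subKn // doubleB bin_sub ?leq_double // /cc exprVn; ring.
Qed.

Definition xs (s : nat -> nat -> rat) (j : nat) : rat :=
  \sum_(k < j.+1) s j k * (-1/4) ^+ k.

Lemma xs_rel s (hs : salie_gf s) n :
  \sum_(j < n.+1) cc n j * xs s j = (n == 0%N)%:R.
Proof.
transitivity (\sum_(j < n.+1) \sum_(k < n.+1) cc n j * (s j k * (-1/4) ^+ k)).
  apply: eq_bigr => j _; rewrite /xs big_distrr /=.
  apply: (sum_extend (fun k => cc n j * (s j k * (-1/4) ^+ k))); first by rewrite -ltnS.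
  by move=> k hk; rewrite (s_above s hs j k hk) mul0r mulr0.
rewrite exchange_big /=.
transitivity (\sum_(k < n.+1) (-1/4 : rat) ^+ k * ('C(n, k)%:R * 4 ^+ k / 4 ^+ n)).
  apply: eq_bigr => k _; rewrite -(hs n k) big_distrr /=; apply: eq_bigr => j _.
  by rewrite /cc; ring.
have := exprDn (1 : rat) (-1) n; rewrite subrr expr0n => e.
transitivity (((4 : rat) ^+ n)^-1 * (n == 0%N)%:R).
  rewrite e big_distrr /=; apply: eq_bigr => k _.
  rewrite expr1n mul1r neg14 -mulr_natr; field.
  by rewrite mul1r !expf_neq0.
by case: n {e} => [|n] /=; rewrite ?expr0 ?invr1 ?mul1r ?mulr0.
Qed.

Lemma a_xs s (hs : salie_gf s) (E : nat -> {poly rat}) (hE : euler_gf E) n :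
  (E n.*2).[2^-1] = xs s n.
Proof.
have := tri_zero cc (fun j => xs s j - (E j.*2).[2^-1]) n.+1 cc_diag.
move=> /(_ _ n (ltnSn n)) /= h; apply/eqP; rewrite eq_sym -subr_eq0; apply/eqP; apply: h.
move=> m _; under eq_bigr => j _ do rewrite mulrBr.
by rewrite sumrB xs_rel // a_even // subrr.
Qed.

Lemma part3 s (hs : salie_gf s) (E : nat -> {poly rat}) (hE : euler_gf E) n :
  (1 <= n)%N ->
  `|(E n.*2).[2^-1]| = (-1) ^+ n * (E n.*2).[2^-1] /\
  (-1) ^+ n * (E n.*2).[2^-1] = \sum_(1 <= k < n.+1) eps s n k.
Proof.
move=> hn.
have h2 : (-1) ^+ n * (E n.*2).[2^-1] = \sum_(1 <= k < n.+1) eps s n k.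
  rewrite (a_xs s hs E hE) /xs big_ord_recl /= (s_col0 s hs n hn) mul0r add0r.
  rewrite big_add1 /= big_mkord big_distrr /=; apply: eq_bigr => k _.
  rewrite /eps (abs_s s hs) /bump /= add1n neg14 !exprD; ring.
split => //.
have h0 : 0 <= (-1) ^+ n * (E n.*2).[2^-1].
  by rewrite h2 big_nat sumr_ge0 // => k _; rewrite /eps divr_ge0 ?exprn_ge0.
have e : (E n.*2).[2^-1] = (-1) ^+ n * ((-1) ^+ n * (E n.*2).[2^-1]).
  by rewrite mulrA -exprD -signr_odd oddD addbb expr0 mul1r.
by rewrite [in LHS]e normrM normr_sign mul1r ger0_norm.
Qed.


Lemma coef_binom (c : rat) m i : ((1 + c%:P * 'X) ^+ m)`_i = c ^+ i * 'C(m, i)%:R.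
Proof.
elim: m i => [|m IH] i.
  by rewrite expr0 coef1; case: i => [|i]; rewrite ?bin0 ?bin0n ?expr0 ?mulr1 ?mulr0.
rewrite exprSr mulrDr mulr1 coefD mulrA coefMX IH.
case: i => [|i] /=; first by rewrite !bin0 addr0.
by rewrite coefMC IH binS natrD exprS; ring.
Qed.

Lemma bin_aux (k j : nat) :
  (if (j <= k)%N then 'C(k, (k - j).*2) else 0%N) =
  (if (j.*2 < k)%N then 0%N else 'C(k, j.*2 - k)).
Proof.
case: ifP => h1; case: ifP => h2.
- by rewrite bin_small //; lia.
- have -> : ((k - j).*2 = k - (j.*2 - k))%N by lia.
  by rewrite bin_sub //; lia.
- lia.
- by rewrite bin_small //; lia.
Qed.

Lemma comb_id (n j : nat) :
  \sum_(k < n.+1) 'C(n, k)%:R * 4 ^+ k * (if (j <= k)%N then 'C(k, (k - j).*2) else 0%N)%:R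
  = 4 ^+ j * 'C(n.*2, j.*2)%:R :> rat.
Proof.
have e : (1 + 2%:P * 'X) ^+ n.*2 = (1 + 4%:P * ('X * (1 + 1%:P * 'X))) ^+ n :> {poly rat}.
  by rewrite -mul2n exprM; congr (_ ^+ n); rewrite !polyC_natr polyC1; ring.
have := congr1 (fun p : {poly rat} => p`_(j.*2)) e; rewrite /= coef_binom.
rewrite -mul2n exprM (_ : (2 : rat) ^+ 2 = 4); last by rewrite expr2 -natrM.
move=> ->; rewrite exprDn coef_sum; apply: eq_bigr => k _.
rewrite expr1n mul1r coefMn exprMn.
rewrite -polyC_exp coefCM exprMn coefXnM coef_binom expr1n mul1r mul2n.
rewrite -mulr_natr bin_aux; case: ifP => _; rewrite ?mulr0 //; ring.
Qed.


Lemma As_id s (hs : salie_gf s) m k :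
  \sum_(l < m.+1) 'C(m, (m - l).*2)%:R * s l k = (m == k)%:R.
Proof.
pose M := (m + k)%N.
pose Pm : 'M[rat]_(M.+1) := \matrix_(i, j) ('C(i, j)%:R * 4 ^+ j / 4 ^+ i).
pose Am : 'M[rat]_(M.+1) := \matrix_(i, j) (if (j <= i)%N then 'C(i, (i - j).*2) else 0%N)%:R.
pose Bm : 'M[rat]_(M.+1) := \matrix_(i, j) ('C(i.*2, j.*2)%:R * 4 ^+ j / 4 ^+ i).
pose Sm : 'M[rat]_(M.+1) := \matrix_(i, j) s i j.
have h4 : forall i : nat, (4 : rat) ^+ i != 0 by move=> i; rewrite expf_neq0.
have hBS : Bm *m Sm = Pm.
  apply/matrixP => i j; rewrite !mxE -(hs i j).
  have hi : (i <= M)%N by rewrite -ltnS.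
  rewrite [RHS](sum_extend (fun l => 'C(i.*2, l.*2)%:R / 4 ^+ (i - l) * s l j) i M hi).
    apply: eq_bigr => l _; rewrite !mxE.
    case: (leqP l i) => hl.
      rewrite (_ : 4 ^+ i = 4 ^+ (i - l) * 4 ^+ l :> rat); last by rewrite -exprD subnK.
      by field; rewrite !h4.
    by rewrite bin_small ?mul0r // ltn_double.
  by move=> l hl; rewrite bin_small ?mul0r // ltn_double.
have hPA : Pm *m Am = Bm.
  apply/matrixP => i j; rewrite !mxE.
  under eq_bigr => l _ do rewrite !mxE.
  have hi : (i <= M)%N by rewrite -ltnS.
  rewrite -(sum_extend (fun l => 'C(i, l)%:R * 4 ^+ l / 4 ^+ i *
      (if (j <= l)%N then 'C(l, (l - j).*2) else 0%N)%:R) i M hi); last first.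
    by move=> l hl; rewrite bin_small ?mul0r.
  have -> : 'C(i.*2, j.*2)%:R * 4 ^+ j / 4 ^+ i =
    ((4 : rat) ^+ i)^-1 * (4 ^+ j * 'C(i.*2, j.*2)%:R) by ring.
  rewrite -comb_id big_distrr /=; apply: eq_bigr => l _; ring.
have hPu : Pm \in unitmx.
  rewrite unitmxE (det_trig (A := Pm)).
    by rewrite big1 ?unitr1 // => i _; rewrite mxE binn mul1r divff.
  by apply/is_trig_mxP => i j hij; rewrite mxE bin_small ?mul0r.
have hAS : Am *m Sm = 1%:M.
  have : Pm *m (Am *m Sm) = Pm *m 1%:M by rewrite mulmxA hPA hBS mulmx1.
  by move/(congr1 (mulmx (invmx Pm))); rewrite !mulKmx.
have := congr1 (fun A : 'M[rat]_(M.+1) => A (inord m) (inord k)) hAS.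
have hm : (m < M.+1)%N by lia.
have hk : (k < M.+1)%N by lia.
rewrite /= !mxE -val_eqE /= !inordK //.
under eq_bigr => l _ do rewrite !mxE !inordK //.
move=> <-.
rewrite -(sum_extend (fun l => (if (l <= m)%N then 'C(m, (m - l).*2) else 0%N)%:R * s l k) m M); last first.
- by move=> l hl; rewrite leqNgt hl mul0r.
- by lia.
apply: eq_bigr => l _; have hl : (l <= m)%N by rewrite -ltnS.
by rewrite hl.
Qed.


Lemma ME_Eps s (hs : salie_gf s) N :
  ME N *m (\matrix_(i < N, j < N) eps s i.+1 j.+1) = 1%:M.
Proof.
case: N => [|N]; first by apply/matrixP => [[]].
apply/matrixP => i k; rewrite !mxE.
under eq_bigr => l _ do rewrite !mxE.
have hi : (i <= N)%N by rewrite -ltnS.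
rewrite -(sum_extend (fun l => (if (l <= i)%N then (-1) ^+ (i - l) * 4 ^+ i.+1 *
   'C(i.+1, (i - l).*2)%:R else 0) * eps s l.+1 k.+1) i N hi); last first.
  by move=> l hl; rewrite leqNgt hl mul0r.
have := As_id s hs i.+1 k.+1; rewrite big_ord_recl /= (s_above s hs 0 k.+1) // mulr0 add0r.
have h4 : forall i : nat, (4 : rat) ^+ i != 0 by move=> j; rewrite expf_neq0.
move=> e.
transitivity ((-1) ^+ (i + k) * (4 : rat) ^+ i.+1 / 4 ^+ k.+1 * (i.+1 == k.+1)%:R).
  rewrite -e big_distrr /=; apply: eq_bigr => l _.
  have hl : (l <= i)%N by rewrite -ltnS.
  rewrite hl /eps (abs_s s hs) /bump /= add1n subSS.
  have -> : (l.+1 + k.+1 = (i + k) + 2 - (i - l))%N by lia.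
  rewrite (_ : (-1) ^+ ((i + k) + 2 - (i - l))%N = (-1) ^+ (i + k) / (-1) ^+ (i - l) :> rat).
    by field; rewrite h4 signr_eq0.
  rewrite -signr_odd oddB; last by lia.
  rewrite (oddD (i + k) 2) addbF -[(-1) ^+ (i + k)]signr_odd -[(-1) ^+ (i - l)]signr_odd.
  by case: (odd (i + k)); case: (odd (i - l)); rewrite /= ?expr0 ?expr1 ?invr1 ?invrN1 ?mulr1 ?mulN1r ?opprK ?divr1.
rewrite eqSS /= (_ : (i == k) = (i == k :> nat)) //.
case: eqP => [e2 | ne]; last by rewrite mulr0.
have -> : (-1) ^+ (i + k) = 1 :> rat by rewrite e2 addnn -signr_odd odd_double.
by rewrite e2 mul1r mulr1 divff.
Qed.


Theorem mainTheorem1 (s : nat -> nat -> rat) (E : nat -> {poly rat})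
    (hs : salie_gf s) (hE : euler_gf E) :
  (forall n k : nat, (1 <= k)%N -> (k <= n)%N ->
      s n k = (-1) ^+ (n - k) * `|s n k|) /\
  (forall N : nat, ME N \in unitmx /\
      (forall i j : 'I_N, (j <= i)%N ->
         invmx (ME N) i j = eps s i.+1 j.+1)) /\
  (forall n : nat, (1 <= n)%N ->
      `|(E n.*2).[2^-1]| = (-1) ^+ n * (E n.*2).[2^-1] /\
      (-1) ^+ n * (E n.*2).[2^-1] = \sum_(1 <= k < n.+1) eps s n k).
Proof.
split.
  move=> n k _ hkn; rewrite (abs_s s hs) mulrA -exprD.
  have -> : (n - k + (n + k) = n.*2)%N by lia.
  by rewrite -signr_odd odd_double expr0 mul1r.
split; last by move=> n hn; exact: part3.
move=> N; have h := ME_Eps s hs N; have [hu _] := mulmx1_unit h.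
split => // i j _.
have -> : invmx (ME N) = \matrix_(i < N, j < N) eps s i.+1 j.+1.
  by rewrite -[RHS](mulKmx hu) h mulmx1.
by rewrite mxE.
Qed.
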